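(* Let $G=(L\cup R,E)$ be a Tanner graph without parallel edges and with no node of degree less than 2. (i) Suppose $G$ is left-regular with left degree $d_l\ge 2$, and let $\mathcal{S}\subset L$ be a nonempty $(a,b)$ trapping set whose induced subgraph $G(\mathcal{S})$ is connected and contains no cycle. Then $b\ge a(d_l-2)+2$, with equality if $\mathcal{S}$ is elementary. (ii) The set of variable nodes of any shortest cycle (of length equal to the girth $g$) of $G$ is an elementary trapping set. (iii) For every $\mathcal{S}\in\mathcal{T}$, the induced subgraph $G(\mathcal{S})$ contains at least one cycle. (iv) If $G$ is left-regular with left degree at least 2 and $\mathcal{S}\subset L$ is a nonempty absorbing set, then $G(\mathcal{S})$ contains at least one cycle. (v) If $G$ is left-regular with left degree $l\ge 3$ and $\mathcal{S}\subset L$ is a nonempty ZP trapping set, then $G(\mathcal{S})$ contains at least one cycle.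
   Context: A Tanner graph is a bipartite graph $G=(L\cup R,E)$ with variable nodes $L$ and check nodes $R$; it is left-regular with left degree $d_l$ if every variable node has degree $d_l$. For $\mathcal{S}\subset L$, $\Gamma(\mathcal{S})$ is the set of neighbors of $\mathcal{S}$ in $R$, and the induced subgraph $G(\mathcal{S})$ has node set $\mathcal{S}\cup\Gamma(\mathcal{S})$ and all edges of $G$ between $\mathcal{S}$ and $\Gamma(\mathcal{S})$. $\Gamma_{\mathrm{o}}(\mathcal{S})$ and $\Gamma_{\mathrm{e}}(\mathcal{S})$ are the check nodes of $\Gamma(\mathcal{S})$ with odd, respectively even, degree in $G(\mathcal{S})$. $\mathcal{S}$ is an $(a,b)$ trapping set if $|\mathcal{S}|=a$ and $|\Gamma_{\mathrm{o}}(\mathcal{S})|=b$ (any subset of $L$ is a trapping set for some $(a,b)$); it is elementary if every check node of $G(\mathcal{S})$ has degree one or two in $G(\mathcal{S})$. $\mathcal{S}$ is an absorbing set if every node of $\mathcal{S}$ has strictly more neighbors in $\Gamma_{\mathrm{e}}(\mathcal{S})$ than in $\Gamma_{\mathrm{o}}(\mathcal{S})$. For $G$ left-regular with left degree $l$, $\mathcal{S}$ is a ZP (Zyablov–Pinsker) trapping set if every node of $\mathcal{S}$ is adjacent to fewer than $l-\lfloor (l-1)/2\rfloor$ nodes of $\Gamma_{\mathrm{o}}(\mathcal{S})$. $\mathcal{T}$ denotes the set of all trapping sets $\mathcal{S}\subset L$ such that $G(\mathcal{S})$ is connected and every node of $\mathcal{S}$ is adjacent to at least two nodes of $\Gamma_{\mathrm{e}}(\mathcal{S})$.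 *)

(* Defs.v *)
(* A Tanner graph is a finite bipartite graph given by
   variable nodes L, check nodes R and an adjacency relation adj : L -> R -> bool
   (a relation, so there are no parallel edges). *)
From mathcomp Require Import all_boot.
Set Implicit Arguments. Unset Strict Implicit. Unset Printing Implicit Defensive.

Section Tanner.
Variables (L R : finType) (adj : L -> R -> bool).

Definition tedge : rel (L + R) := fun x y =>
  match x, y with
  | inl v, inr r => adj v r
  | inr r, inl v => adj v r
  | _, _ => false
  end.

Definition ldeg (v : L) : nat := #|[set r | adj v r]|.
Definition rdeg (r : R) : nat := #|[set v | adj v r]|.

Definition min_deg2 : Prop :=
  (forall v, 2 <= ldeg v) /\ (forall r, 2 <= rdeg r).

Definition left_regular (dl : nat) : Prop := forall v, ldeg v = dl.

Definition Gamma (S : {set L}) : {set R} := [set r | [exists v in S, adj v r]].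

Definition deg_in (S : {set L}) (r : R) : nat := #|[set v in S | adj v r]|.

Definition Gamma_o (S : {set L}) : {set R} := [set r in Gamma S | odd (deg_in S r)].
Definition Gamma_e (S : {set L}) : {set R} := [set r in Gamma S | ~~ odd (deg_in S r)].

Definition Gnodes (S : {set L}) : pred (L + R) := fun x =>
  match x with inl v => v \in S | inr r => r \in Gamma S end.

Definition induced_edge (S : {set L}) : rel (L + R) := fun x y =>
  [&& Gnodes S x, Gnodes S y & tedge x y].

Definition induced_connected (S : {set L}) : Prop :=
  forall x y, Gnodes S x -> Gnodes S y -> connect (induced_edge S) x y.

Definition is_cycle (T : eqType) (e : rel T) (p : seq T) : Prop :=
  [/\ 3 <= size p, uniq p & cycle e p].

Definition has_cycle (T : eqType) (e : rel T) : Prop := exists p, is_cycle e p.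

Definition trapping_set (S : {set L}) (a b : nat) : Prop :=
  #|S| = a /\ #|Gamma_o S| = b.

Definition elementary (S : {set L}) : Prop :=
  forall r, r \in Gamma S -> 1 <= deg_in S r <= 2.

Definition nbrs_in (v : L) (C : {set R}) : nat := #|[set r in C | adj v r]|.

Definition absorbing (S : {set L}) : Prop :=
  forall v, v \in S -> nbrs_in v (Gamma_o S) < nbrs_in v (Gamma_e S).

Definition ZP_trapping (l : nat) (S : {set L}) : Prop :=
  forall v, v \in S -> nbrs_in v (Gamma_o S) < l - (l.-1)./2.

Definition in_T (S : {set L}) : Prop :=
  induced_connected S /\ (forall v, v \in S -> 2 <= nbrs_in v (Gamma_e S)).

Definition var_nodes (p : seq (L + R)) : {set L} := [set v | inl v \in p].

End Tanner.

(* Main.v *)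
Require Import Defs.
From mathcomp Require Import all_boot zify.
Set Implicit Arguments. Unset Strict Implicit. Unset Printing Implicit Defensive.

Section Generic.
Variables (T : finType) (e : rel T).
Hypothesis esym : symmetric e.
Hypothesis eirr : irreflexive e.

Lemma mindeg_cycle (H : pred T) :
  (forall x, H x -> forall z, exists y, [&& H y, e x y & y != z]) ->
  forall x0, H x0 -> has_cycle e.
Proof.
move=> Hdeg x0 Hx0.
suff: forall n x p, #|T| - size p <= n -> uniq (x :: p) -> path e x p -> H x -> has_cycle e.
  by move/(_ #|T| x0 [::]); apply => //; rewrite subn0.
elim=> [|n IH] x p Hn Hu Hp Hx.
  move: Hn; rewrite leqn0 subn_eq0 => Hn.
  by have := leq_trans (max_card (mem (x::p))) Hn; rewrite (card_uniqP Hu) /= ltnn.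
have [y /and3P [Hy Hxy Hyz]] := Hdeg x Hx (head x p).
have [yin|ynot] := boolP (y \in x :: p).
  move: yin; rewrite in_cons => /orP [/eqP yx|yp].
    by move: Hxy; rewrite yx eirr.
  case/splitPr: yp Hu Hp Hyz => p1 p2 Hu Hp Hyz.
  case: p1 Hu Hp Hyz => [|a p1] Hu Hp Hyz.
    by rewrite /= eqxx in Hyz.
  exists (x :: rcons (a :: p1) y); split.
  - by rewrite /= size_rcons.
  - move: Hu; rewrite -cat_rcons -cat_cons cat_uniq; by case/and3P.
  - have Hq : path e x (rcons (a :: p1) y).
      by move: Hp; rewrite -cat_rcons cat_path => /andP [].
    change (path e x (rcons (rcons (a :: p1) y) x)).
    by rewrite rcons_path Hq last_rcons esym.
have Hc := max_card (mem (x::p)); rewrite (card_uniqP Hu) /= in Hc.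
apply: (IH y (x :: p)) => //.
- move: Hn Hc. simpl. lia.
- by rewrite /= ynot.
- by rewrite /= esym Hxy.
Qed.
End Generic.
Section Tree.
Variables (T : finType) (e : rel T).
Hypothesis esym : symmetric e.
Hypothesis eirr : irreflexive e.

Definition eV (V : {set T}) : rel T := fun x y => [&& x \in V, y \in V & e x y].
Definition degV (V : {set T}) x := #|[set y in V | e x y]|.

Lemma two_ne (A : {set T}) z : 2 <= #|A| -> exists y, (y \in A) && (y != z).
Proof.
rewrite (cardsD1 z A) => H.
have : A :\ z != set0 by rewrite -card_gt0; move: H; case: (z \in A) => /= H; lia.
case/set0Pn => y; rewrite !inE => /andP [H1 H2]; exists y; by rewrite H1 H2.
Qed.

Lemma eV_sym V : symmetric (eV V).
Proof. by move=> x y; rewrite /eV esym andbCA. Qed.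

Lemma eV_irr V : irreflexive (eV V).
Proof. by move=> x; rewrite /eV eirr !andbF. Qed.

Lemma path_inV V a p : path (eV V) a p -> all (fun u => u \in V) p.
Proof.
elim: p a => [//|b p IH] a /= /andP [/and3P [_ Hb _] Hp].
by rewrite Hb (IH b Hp).
Qed.

Lemma tree_degsum n (V : {set T}) : #|V| = n.+1 ->
  (forall x y, x \in V -> y \in V -> connect (eV V) x y) -> ~ has_cycle (eV V) ->
  \sum_(x in V) degV V x = n.*2.
Proof.
elim: n V => [|n IH] V HV Hcon Hac.
  have /cards1P [x ->] : #|V| == 1 by rewrite HV.
  rewrite big_set1 /degV; apply/eqP; rewrite cards_eq0; apply/eqP/setP => y.
  by rewrite !inE; case: (eqVneq y x) => [->|//]; rewrite eirr andbF.
have [/existsP [x /andP [xV Hx]] | Hno] := boolP [exists x, (x \in V) && (degV V x <= 1)]; last first.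
  exfalso; apply: Hac.
  have : V != set0 by rewrite -card_gt0 HV.
  case/set0Pn => x0 x0V.
  apply: (mindeg_cycle (eV_sym V) (eV_irr V) (H := fun x => x \in V)) x0V => x xV z.
  have : 2 <= degV V x.
    by move/existsPn: Hno => /(_ x); rewrite xV /= ltnNge.
  move/(two_ne z) => [y]; rewrite !inE => /andP [/andP [yV Hxy] Hyz].
  by exists y; rewrite /eV /= xV yV Hxy Hyz.
have Hn2 : 2 <= #|V| by rewrite HV.
have [y /andP [yV yx]] := two_ne x Hn2.
have degx : degV V x = 1.
  apply/eqP; rewrite eqn_leq Hx /= /degV card_gt0.
  have := Hcon x y xV yV; case/connectP => [[|a p]] /=.
    by move=> _ Eyx; rewrite Eyx eqxx in yx.
  move=> /andP [/and3P [_ aV Hxa] _] _; apply/set0Pn; exists a; by rewrite !inE aV Hxa.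
set V' := V :\ x.
have V'sub : forall u, u \in V' -> u \in V by move=> u; rewrite !inE => /andP [].
have HV' : #|V'| = n.+1.
  by move: HV; rewrite (cardsD1 x V) xV add1n => [[]].
rewrite (big_setD1 x xV) /= degx.
have Hd : forall u, u \in V' -> degV V u = (e u x : nat) + degV V' u.
  move=> u uV'; rewrite /degV (cardsD1 x [set y in V | e u y]) !inE xV /=.
  congr (_ + _); apply: eq_card => w; by rewrite !inE andbA.
rewrite (eq_bigr _ Hd) big_split /=.
have Hs : \sum_(u in V') (e u x : nat) = 1.
  rewrite -[RHS]degx /degV -sum1_card big_mkcond [RHS]big_mkcond /=.
  apply: eq_bigr => u _; rewrite !inE esym.
  by case: (eqVneq u x) => [->|]; rewrite ?eirr ?andbF //=; case: (u \in V); case: (e x u).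
rewrite Hs IH //.
- move=> a b aV' bV'.
  have /connectP [p Hp Hb] := Hcon a b (V'sub a aV') (V'sub b bV').
  case: (shortenP Hp) Hb => p' Hp' Hu' _ Hb.
  have HallV := path_inV Hp'.
  have xnot : x \notin a :: p'.
    rewrite in_cons negb_or; apply/andP; split.
      by move: aV'; rewrite !inE => /andP [ax _]; rewrite eq_sym.
    apply/negP => xp.
    case/splitPr: xp Hp' Hu' Hb HallV => p1 p2 Hp' Hu' Hb _.
    case: p2 Hp' Hu' Hb => [|c p2] Hp' Hu' Hb.
      rewrite last_cat /= in Hb.
      by move: bV'; rewrite Hb !inE eqxx.
    move: Hp'; rewrite cat_path /= => /and4P [_ H1 H2 _].
    have Hne : last a p1 != c.
      move: Hu'; rewrite -cat_cons cat_uniq => /and3P [_ Hh _].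
      apply/eqP => Ec; have Hl := mem_last a p1; rewrite Ec in Hl.
      by move: Hh; rewrite /= Hl !orbT.
    have Hsub : [set last a p1; c] \subset [set y in V | e x y].
      apply/subsetP => w; rewrite !inE => /orP [/eqP->|/eqP->].
        by move/and3P: H1 => [-> _]; rewrite esym.
      by move/and3P: H2 => [_ -> ->].
    have := subset_leq_card Hsub; rewrite cards2 Hne.
    by move: degx; rewrite /degV => ->.
  have Hall : all (fun u => u \in V') (a :: p').
    apply/allP => u; rewrite in_cons => /orP [/eqP -> // | up].
    rewrite !inE (allP HallV u up) andbT.
    apply/eqP => ux; move: xnot; by rewrite -ux in_cons up orbT.
  apply/connectP; exists p' => //.
  apply: (sub_in_path _ Hall Hp').
  move=> u w uV' wV' /and3P [_ _ Huw]; by rewrite /eV uV' wV' Huw.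
- move=> [p [H1 H2 H3]]; apply: Hac; exists p; split => //.
  apply: sub_cycle H3 => u w /and3P [uV wV Huw].
  by rewrite /eV (V'sub _ uV) (V'sub _ wV) Huw.
Qed.
End Tree.
Section Short.
Variables (T : eqType) (e : rel T).
Hypothesis esym : symmetric e.
Hypothesis eirr : irreflexive e.

Lemma pick3 (h l u1 u2 u3 : T) : u1 != u2 -> u1 != u3 -> u2 != u3 ->
  exists u, [/\ u \in [:: u1; u2; u3], u != h & u != l].
Proof.
move=> N12 N13 N23.
have [H1|H1] := boolP ((u1 != h) && (u1 != l)).
  by exists u1; case/andP: H1 => -> ->; rewrite inE eqxx.
have [H2|H2] := boolP ((u2 != h) && (u2 != l)).
  by exists u2; case/andP: H2 => -> ->; rewrite !inE eqxx orbT.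
exists u3; rewrite !inE eqxx !orbT; move: H1 H2; rewrite !negb_and !negbK.
case/orP => /eqP E1; case/orP => /eqP E2; subst; split => //;
  by rewrite ?(eq_sym u3) // ?(eqxx) in N12 *.
Qed.

Lemma chord_out w u1 u2 A B : uniq (u1 :: A ++ u2 :: B) ->
  cycle e (u1 :: A ++ u2 :: B) -> w \notin (u1 :: A ++ u2 :: B) ->
  e w u1 -> e w u2 -> is_cycle e (w :: u1 :: rcons A u2).
Proof.
have Eq : u1 :: A ++ u2 :: B = (u1 :: rcons A u2) ++ B by rewrite /= cat_rcons.
rewrite Eq => Hu Hc Hw H1 H2; split.
- by rewrite /= size_rcons.
- rewrite cons_uniq; move: Hw Hu; rewrite mem_cat negb_or cat_uniq.
  by case/andP => -> _ /and3P [-> _ _].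
- change (path e w (rcons (u1 :: rcons A u2) w)).
  rewrite rcons_path /= H1 last_rcons esym H2 andbT.
  move: Hc; rewrite -Eq.
  change (path e u1 (rcons (A ++ u2 :: B) u1) -> path e u1 (rcons A u2)).
  by rewrite rcons_cat -cat_rcons cat_path => /andP [].
Qed.

Lemma chord_in w u A B : uniq (w :: A ++ u :: B) ->
  cycle e (w :: A ++ u :: B) -> e w u -> A != [::] ->
  is_cycle e (w :: rcons A u).
Proof.
have Eq : w :: A ++ u :: B = (w :: rcons A u) ++ B by rewrite /= cat_rcons.
rewrite Eq => Hu Hc H1 HA; split.
- by rewrite /= size_rcons; case: A HA {Eq Hu Hc}.
- by move: Hu; rewrite cat_uniq => /and3P [].
- change (path e w (rcons (rcons A u) w)).
  rewrite rcons_path last_rcons esym H1 andbT.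
  move: Hc; rewrite -Eq.
  change (path e w (rcons (A ++ u :: B) w) -> path e w (rcons A u)).
  by rewrite rcons_cat -cat_rcons cat_path => /andP [].
Qed.

Lemma three_cyc w u1 u2 u3 A B C :
  let p := u1 :: A ++ u2 :: B ++ u3 :: C in
  uniq p -> cycle e p -> w \notin p -> e w u1 -> e w u2 -> e w u3 -> A != [::] ->
  exists q, is_cycle e q /\ size q < size p.
Proof.
move=> p Hu Hc Hw H1 H2 H3 HA.
have Hsz : size p = size A + size B + size C + 3.
  by rewrite /p /= size_cat /= size_cat /=; lia.
have [BC|BC] := boolP (0 < size B + size C).
  exists (w :: u1 :: rcons A u2); split.
    exact: (chord_out (B := B ++ u3 :: C) Hu Hc Hw H1 H2).
  rewrite Hsz /= size_rcons; lia.
have Ep2 : rot (size (u1 :: A)) p = u2 :: B ++ u3 :: (C ++ u1 :: A).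
  by rewrite /p -cat_cons rot_size_cat /= -catA.
exists (w :: u2 :: rcons B u3); split.
  apply: (chord_out (B := C ++ u1 :: A)) => //; rewrite -Ep2.
  - by rewrite rot_uniq.
  - by rewrite rot_cycle.
  - by rewrite mem_rot.
rewrite Hsz /= size_rcons; case: A HA {Hu Hc Hw p Hsz Ep2} => //= a A _; lia.
Qed.

Lemma C_out p w u1 u2 u3 : uniq p -> cycle e p -> w \notin p ->
  u1 \in p -> u2 \in p -> u3 \in p -> u1 != u2 -> u1 != u3 -> u2 != u3 ->
  e w u1 -> e w u2 -> e w u3 -> ~~ e u1 u2 -> ~~ e u1 u3 ->
  exists q, is_cycle e q /\ size q < size p.
Proof.
move=> Hu Hc Hw i1 i2 i3 N12 N13 N23 H1 H2 H3 F12 F13.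
case: (rot_to i1) => i p' Ep.
have Hu' : uniq (u1 :: p') by rewrite -Ep rot_uniq.
have Hc' : cycle e (u1 :: p') by rewrite -Ep rot_cycle.
have Hw' : w \notin u1 :: p' by rewrite -Ep mem_rot.
have Hs : size p = size (u1 :: p') by rewrite -Ep size_rot.
have i2' : u2 \in p'.
  by move: i2; rewrite -(mem_rot i) Ep in_cons eq_sym (negbTE N12).
have i3' : u3 \in p'.
  by move: i3; rewrite -(mem_rot i) Ep in_cons eq_sym (negbTE N13).
rewrite Hs; clear Hs Ep Hu Hc Hw i1 i2 i3.
case/splitPr: i2' Hu' Hc' Hw' i3' => A D Hu Hc Hw.
rewrite mem_cat in_cons eq_sym (negbTE N23) /= => /orP [i3|i3].
  case/splitPr: i3 Hu Hc Hw => A1 A2 Hu Hc Hw.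
  move: Hu Hc Hw; rewrite -catA cat_cons => Hu Hc Hw.
  apply: (three_cyc Hu Hc Hw H1 H3 H2).
  case: A1 {Hu Hw} Hc => // Hc.
  by move: Hc; rewrite /= => /andP [H _]; rewrite H in F13.
case/splitPr: i3 Hu Hc Hw => B C Hu Hc Hw.
apply: (three_cyc Hu Hc Hw H1 H2 H3).
case: A {Hu Hw} Hc => // Hc.
by move: Hc; rewrite /= => /andP [H _]; rewrite H in F12.
Qed.

Lemma C_in p w u1 u2 u3 : uniq p -> cycle e p -> w \in p ->
  u1 \in p -> u2 \in p -> u3 \in p -> u1 != u2 -> u1 != u3 -> u2 != u3 ->
  e w u1 -> e w u2 -> e w u3 ->
  exists q, is_cycle e q /\ size q < size p.
Proof.
move=> Hu Hc Hwp i1 i2 i3 N12 N13 N23 H1 H2 H3.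
case: (rot_to Hwp) => i p' Ep.
have Hu' : uniq (w :: p') by rewrite -Ep rot_uniq.
have Hc' : cycle e (w :: p') by rewrite -Ep rot_cycle.
have Hs : size p = size (w :: p') by rewrite -Ep size_rot.
have Hin : forall u, u \in p -> e w u -> u \in p'.
  move=> u up Hwu; move: up; rewrite -(mem_rot i) Ep in_cons.
  case: (eqVneq u w) => [Euw|//]; by rewrite Euw eirr in Hwu.
have [u [Hu3 Nh Nl]] := pick3 (head w p') (last w p') N12 N13 N23.
have [up Hwu] : u \in p' /\ e w u.
  move: Hu3; rewrite !inE => /or3P [] /eqP ->; split => //; exact: Hin.
rewrite Hs; clear Hs Ep.
case/splitPr: up Hu' Hc' Nh Nl => A B Hu' Hc' Nh Nl.
exists (w :: rcons A u); split.
  apply: (chord_in (B := B)) => //; case: A Nh {Hu' Hc' Nl} => //=; rewrite eqxx //.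
rewrite /= size_rcons size_cat /=.
case: B Nl Nh {Hu' Hc'} => [|b B] /=.
  by rewrite last_cat /= eqxx.
move=> _ _; rewrite addnS ltnS ltnS addnS; exact: leq_addr.
Qed.

End Short.

Lemma two_dist (T : finType) (A : {set T}) : 2 <= #|A| ->
  exists r1 r2, [/\ r1 \in A, r2 \in A & r1 != r2].
Proof.
move=> H.
have : A != set0 by rewrite -card_gt0; apply: leq_trans H.
case/set0Pn => r1 r1A.
have : 0 < #|A :\ r1| by move: H; rewrite (cardsD1 r1 A) r1A.
rewrite card_gt0 => /set0Pn [r2]; rewrite !inE => /andP [N r2A].
by exists r1, r2; rewrite eq_sym.
Qed.

Lemma three_dist (T : finType) (A : {set T}) : 3 <= #|A| ->
  exists v1 v2 v3, [/\ v1 \in A, v2 \in A, v3 \in A & [/\ v1 != v2, v1 != v3 & v2 != v3]].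
Proof.
move=> H.
have : A != set0 by rewrite -card_gt0; apply: leq_trans H.
case/set0Pn => v1 v1A.
have : 2 <= #|A :\ v1| by move: H; rewrite (cardsD1 v1 A) v1A.
case/two_dist => v2 [v3 []]; rewrite !inE => /andP [N2 H2] /andP [N3 H3] N23.
by exists v1, v2, v3; rewrite !(eq_sym v1).
Qed.

Lemma pick_ne (U : eqType) (a b z : U) : a != b -> exists2 c, (c == a) || (c == b) & c != z.
Proof.
move=> N; case: (eqVneq a z) => [E|E]; last by exists a; rewrite ?eqxx.
by exists b; rewrite ?eqxx ?orbT // -E eq_sym.
Qed.

Lemma cardsum (T : finType) (A : {set T}) (P : pred T) :
  #|[set y in A | P y]| = \sum_(y in A) (P y : nat).
Proof.
rewrite -sum1_card big_mkcond [RHS]big_mkcond; apply: eq_bigr => y _.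
by rewrite inE; case: (y \in A); case: (P y).
Qed.

Section Main.
Variables (L R : finType) (adj : L -> R -> bool).

Lemma tedge_sym : symmetric (tedge adj).
Proof. by case=> [v|r] [v'|r']. Qed.

Lemma tedge_irr : irreflexive (tedge adj).
Proof. by case. Qed.

Lemma ind_sym (S : {set L}) : symmetric (induced_edge adj S).
Proof. by move=> x y; rewrite /induced_edge tedge_sym andbCA. Qed.

Lemma ind_irr (S : {set L}) : irreflexive (induced_edge adj S).
Proof. by move=> x; rewrite /induced_edge tedge_irr !andbF. Qed.

Lemma adjG (S : {set L}) v r : v \in S -> adj v r -> r \in Gamma adj S.
Proof. by move=> vS a; rewrite inE; apply/existsP; exists v; rewrite vS a. Qed.

Lemma deg_pos (S : {set L}) r : r \in Gamma adj S -> 0 < deg_in adj S r.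
Proof.
rewrite inE => /existsP [v /andP [vS a]].
by rewrite /deg_in card_gt0; apply/set0Pn; exists v; rewrite inE vS a.
Qed.

Lemma GeG (S : {set L}) r : r \in Gamma_e adj S -> r \in Gamma adj S.
Proof. by rewrite /Gamma_e in_set => /andP []. Qed.

Lemma in_nb (C : {set R}) v r : (r \in [set r in C | adj v r]) = (r \in C) && adj v r.
Proof. by rewrite inE. Qed.

Lemma core_cycle (S : {set L}) : S != set0 ->
  (forall v, v \in S -> 2 <= nbrs_in adj v (Gamma_e adj S)) ->
  has_cycle (induced_edge adj S).
Proof.
case/set0Pn => v0 v0S Hdeg.
pose H := fun x => match x with inl v => v \in S | inr r => r \in Gamma_e adj S end.
apply: (@mindeg_cycle _ _ (ind_sym S) (ind_irr S) H _ (inl v0) v0S).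
case=> [v|r] /= Hx z; rewrite /H.
- have [r1 [r2 [H1 H2 N]]] := two_dist (Hdeg v Hx).
  have N' : inr r1 != inr r2 :> L + R by [].
  have [c Hc Hcz] := pick_ne z N'.
  exists c; rewrite Hcz andbT.
  move: H1 H2; rewrite /nbrs_in !in_nb.
  case/orP: Hc => /eqP -> => [/andP [Hr a] _ | _ /andP [Hr a]];
    by rewrite /induced_edge /= Hx (GeG Hr) a Hr.
- have Hd : 2 <= deg_in adj S r.
    have := deg_pos (GeG Hx); move: Hx; rewrite /Gamma_e in_set => /andP [_].
    by case: (deg_in adj S r) => [|[|n]].
  have [v1 [v2 [H1 H2 N]]] := two_dist Hd.
  have N' : inl v1 != inl v2 :> L + R by [].
  have [c Hc Hcz] := pick_ne z N'.
  exists c; rewrite Hcz andbT.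
  move: H1 H2; rewrite !inE.
  case/orP: Hc => /eqP -> => [/andP [Hv a] _ | _ /andP [Hv a]];
    by rewrite /induced_edge /= Hv a (GeG Hx).
Qed.

Lemma mem_Go (S : {set L}) r : (r \in Gamma_o adj S) = (r \in Gamma adj S) && odd (deg_in adj S r).
Proof. by rewrite /Gamma_o in_set. Qed.

Lemma mem_Ge (S : {set L}) r : (r \in Gamma_e adj S) = (r \in Gamma adj S) && ~~ odd (deg_in adj S r).
Proof. by rewrite /Gamma_e in_set. Qed.

Lemma in_adj v r : (r \in [set r | adj v r]) = adj v r.
Proof. by rewrite inE. Qed.

Lemma ldeg_split (S : {set L}) v : v \in S ->
  ldeg adj v = nbrs_in adj v (Gamma_o adj S) + nbrs_in adj v (Gamma_e adj S).
Proof.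
move=> vS; rewrite /ldeg -(cardsID (Gamma_o adj S) [set r | adj v r]) /nbrs_in.
congr (_ + _); apply: eq_card => r.
  by rewrite in_setI in_adj in_nb andbC.
rewrite in_setD in_adj in_nb; case: (boolP (adj v r)) => a; rewrite ?andbF ?andbT //.
by rewrite mem_Go mem_Ge (adjG vS a).
Qed.

Lemma part3 (S : {set L}) : S != set0 -> in_T adj S -> has_cycle (induced_edge adj S).
Proof. by move=> HS [_ H]; apply: core_cycle. Qed.

Lemma part4 dl : left_regular adj dl -> 2 <= dl ->
  forall S : {set L}, S != set0 -> absorbing adj S -> has_cycle (induced_edge adj S).
Proof.
move=> Hreg Hdl S HS Habs; apply: core_cycle => // v vS.
have := ldeg_split vS; rewrite Hreg; have := Habs v vS.
move: (nbrs_in _ _ _) (nbrs_in _ _ _) => o e'; lia.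
Qed.

Lemma part5 l : left_regular adj l -> 3 <= l ->
  forall S : {set L}, S != set0 -> ZP_trapping adj l S -> has_cycle (induced_edge adj S).
Proof.
move=> Hreg Hl S HS Hzp; apply: core_cycle => // v vS.
have Hh : 1 <= (l.-1)./2 by case: l {Hreg Hzp} Hl => [|[|[|l]]].
have := ldeg_split vS; rewrite Hreg; have := Hzp v vS.
move: (nbrs_in _ _ _) (nbrs_in _ _ _) Hh => o e'; move: ((l.-1)./2) => h; lia.
Qed.

Lemma part2 (p : seq (L + R)) : is_cycle (tedge adj) p ->
  (forall q, is_cycle (tedge adj) q -> size p <= size q) ->
  elementary adj (var_nodes p).
Proof.
move=> [Hs Hu Hc] Hmin r Hr; rewrite deg_pos //=.
rewrite leqNgt; apply/negP => H3.
have [v1 [v2 [v3 [H1 H2 H3' [N12 N13 N23]]]]] := three_dist H3.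
move: H1 H2 H3'; rewrite !inE => /andP [i1 a1] /andP [i2 a2] /andP [i3 a3].
have N12' : inl v1 != inl v2 :> L + R by [].
have N13' : inl v1 != inl v3 :> L + R by [].
have N23' : inl v2 != inl v3 :> L + R by [].
have [q [Hq Hsz]] : exists q, is_cycle (tedge adj) q /\ size q < size p.
  have [wp|wp] := boolP (inr r \in p).
    exact: (C_in tedge_sym tedge_irr Hu Hc wp i1 i2 i3 N12' N13' N23' a1 a2 a3).
  exact: (C_out tedge_sym Hu Hc wp i1 i2 i3 N12' N13' N23' a1 a2 a3).
by have := Hmin q Hq; rewrite leqNgt Hsz.
Qed.

Lemma part1 dl : left_regular adj dl -> 2 <= dl ->
     forall (S : {set L}) (a b : nat),
       S != set0 -> trapping_set adj S a b ->
       induced_connected adj S -> ~ has_cycle (induced_edge adj S) ->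
       a * (dl - 2) + 2 <= b /\ (elementary adj S -> b = a * (dl - 2) + 2).
Proof.
move=> Hreg Hdl S a b HS [Ha Hb] Hcon Hac; subst a b.
set V : {set L + R} := [set x | Gnodes adj S x].
have inVl : forall v, (inl v \in V) = (v \in S) by move=> v; rewrite /V in_set.
have inVr : forall r, (inr r \in V) = (r \in Gamma adj S) by move=> r; rewrite /V in_set.
have EV : induced_edge adj S =2 eV (tedge adj) V.
  by move=> x y; rewrite /eV /induced_edge /V !in_set.
have cV : #|V| = #|S| + #|Gamma adj S|.
  rewrite -sum1_card big_sumType -!sum1_card; congr (_ + _); apply: eq_bigl => x.
    by rewrite inVl.
  by rewrite inVr.
have Vpos : 0 < #|V| by rewrite cV addn_gt0 card_gt0 HS.
have Hcon' : forall x y, x \in V -> y \in V -> connect (eV (tedge adj) V) x y.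
  move=> x y xV yV; rewrite -(eq_connect EV); apply: Hcon.
    by move: xV; rewrite /V in_set.
  by move: yV; rewrite /V in_set.
have Hac' : ~ has_cycle (eV (tedge adj) V).
  move=> [p [H1 H2 H3]]; apply: Hac; exists p; split => //; by rewrite (eq_cycle EV).
have Htree := @tree_degsum _ _ tedge_sym tedge_irr #|V|.-1 V (esym (prednK Vpos)) Hcon' Hac'.
have Hdeg : \sum_(x in V) degV (tedge adj) V x =
   \sum_(v in S) \sum_(r in Gamma adj S) (adj v r : nat) +
   \sum_(r in Gamma adj S) \sum_(v in S) (adj v r : nat).
  rewrite /degV; under eq_bigr do rewrite cardsum.
  rewrite big_sumType; congr (_ + _); apply: eq_big => [x|x _]; rewrite ?inVl ?inVr //.
    rewrite big_sumType /= big1 ?add0n; last by [].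
    by apply: eq_bigl => y; rewrite inVr.
  rewrite big_sumType /= [X in _ + X]big1 ?addn0; last by [].
  by apply: eq_bigl => y; rewrite inVl.
have HY : \sum_(v in S) \sum_(r in Gamma adj S) (adj v r : nat) = #|S| * dl.
  rewrite -sum_nat_const; apply: eq_bigr => v vS.
  rewrite -(Hreg v) /ldeg -cardsum; apply: eq_card => r; rewrite in_nb in_adj.
  by case: (boolP (adj v r)) => ar; rewrite ?andbF ?andbT ?(adjG vS ar).
have HX : \sum_(r in Gamma adj S) deg_in adj S r = #|S| * dl.
  rewrite -HY exchange_big /=; apply: eq_bigr => r _; by rewrite /deg_in cardsum.
have Htot : (#|S| * dl + #|S| * dl) = (#|S| + #|Gamma adj S|).-1.*2.
  by rewrite -cV -Htree Hdeg HY exchange_big /= HY.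
have Hsplit : \sum_(r in Gamma adj S) deg_in adj S r =
   \sum_(r in Gamma_o adj S) deg_in adj S r + \sum_(r in Gamma_e adj S) deg_in adj S r.
  rewrite (bigID (fun r => odd (deg_in adj S r))) /=; congr (_ + _);
    by apply: eq_bigl => r; rewrite ?mem_Go ?mem_Ge.
have Hc : #|Gamma adj S| = #|Gamma_o adj S| + #|Gamma_e adj S|.
  rewrite -!sum1_card (bigID (fun r => odd (deg_in adj S r))) /=; congr (_ + _);
    by apply: eq_bigl => r; rewrite ?mem_Go ?mem_Ge.
have Ho : #|Gamma_o adj S| <= \sum_(r in Gamma_o adj S) deg_in adj S r.
  rewrite -sum1_card; apply: leq_sum => r; rewrite mem_Go => /andP [rG _]; exact: deg_pos.
have He : #|Gamma_e adj S| * 2 <= \sum_(r in Gamma_e adj S) deg_in adj S r.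
  rewrite -sum_nat_const; apply: leq_sum => r; rewrite mem_Ge => /andP [rG ev].
  by have := deg_pos rG; move: ev; case: (deg_in adj S r) => [|[|n]].
have Hge : #|S| * 2 <= #|S| * dl by rewrite leq_mul2l Hdl orbT.
have Spos : 0 < #|S| by rewrite card_gt0.
rewrite mulnBr; split.
  move: Htot HX Hsplit Hc Ho He Hge Spos.
  move: (#|S| * dl) (\sum_(r in Gamma_o adj S) _) (\sum_(r in Gamma_e adj S) _) => P so se.
  move: (\sum_(r in Gamma adj S) _) #|Gamma adj S| #|Gamma_o adj S| #|Gamma_e adj S| #|S| => X c bo be a.
  lia.
move=> Hel.
have Ho' : \sum_(r in Gamma_o adj S) deg_in adj S r = #|Gamma_o adj S|.
  rewrite -sum1_card; apply: eq_bigr => r; rewrite mem_Go => /andP [rG od].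
  by have := Hel r rG; move: od; case: (deg_in adj S r) => [|[|[|n]]].
have He' : \sum_(r in Gamma_e adj S) deg_in adj S r = #|Gamma_e adj S| * 2.
  rewrite -sum_nat_const; apply: eq_bigr => r; rewrite mem_Ge => /andP [rG od].
  by have := Hel r rG; move: od; case: (deg_in adj S r) => [|[|[|n]]].
move: Htot HX Hsplit Hc Ho' He' Hge Spos.
move: (#|S| * dl) (\sum_(r in Gamma_o adj S) _) (\sum_(r in Gamma_e adj S) _) => P so se.
move: (\sum_(r in Gamma adj S) _) #|Gamma adj S| #|Gamma_o adj S| #|Gamma_e adj S| #|S| => X c bo be a.
lia.
Qed.

End Main.

Theorem lemma6 (L R : finType) (adj : L -> R -> bool) (hG : min_deg2 adj) :
  (* (i) *)
  (forall dl : nat, left_regular adj dl -> 2 <= dl ->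
     forall (S : {set L}) (a b : nat),
       S != set0 -> trapping_set adj S a b ->
       induced_connected adj S -> ~ has_cycle (induced_edge adj S) ->
       a * (dl - 2) + 2 <= b /\ (elementary adj S -> b = a * (dl - 2) + 2)) /\
  (* (ii) *)
  (forall p : seq (L + R), is_cycle (tedge adj) p ->
     (forall q, is_cycle (tedge adj) q -> size p <= size q) ->
     elementary adj (var_nodes p)) /\
  (* (iii) *)
  (forall S : {set L}, S != set0 -> in_T adj S -> has_cycle (induced_edge adj S)) /\
  (* (iv) *)
  (forall dl : nat, left_regular adj dl -> 2 <= dl ->
     forall S : {set L}, S != set0 -> absorbing adj S ->
       has_cycle (induced_edge adj S)) /\
  (* (v) *)
  (forall l : nat, left_regular adj l -> 3 <= l ->
     forall S : {set L}, S != set0 -> ZP_trapping adj l S ->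
       has_cycle (induced_edge adj S)).
Proof.
split; first exact: part1.
split; first exact: part2.
split; first exact: part3.
split; first exact: part4.
exact: part5.
Qed.
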